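(* If a $2$-step nilpotent real Lie algebra $\mathfrak{n}$ admits a $3$-step complex structure, then $\dim[\mathfrak{n},\mathfrak{n}]\geq3$.
   Context: A complex structure on a real Lie algebra $\mathfrak{g}$ is a linear map $J:\mathfrak{g}\to\mathfrak{g}$ with $J^2=-I$ and $N_J(x,y):=[x,y]+J([Jx,y]+[x,Jy])-[Jx,Jy]=0$ for all $x,y\in\mathfrak{g}$. Given such $J$, define inductively $\mathfrak{a}_0(J)=0$ and $\mathfrak{a}_\ell(J)=\{x\in\mathfrak{g}: [x,\mathfrak{g}]\subset\mathfrak{a}_{\ell-1}(J)\text{ and }[Jx,\mathfrak{g}]\subset\mathfrak{a}_{\ell-1}(J)\}$ for $\ell\ge1$. $J$ is called nilpotent if $\mathfrak{a}_t(J)=\mathfrak{g}$ for some positive integer $t$, and $t$-step if $t$ is the smallest such integer. A Lie algebra $\mathfrak{n}$ is $2$-step nilpotent if it is non-abelian and $[\mathfrak{n},\mathfrak{n}]\subset\mathfrak{z}$ (the center). *)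

(* Defs.v *)
From HB Require Import structures.
From mathcomp Require Import all_boot all_order all_algebra.
From mathcomp Require Import reals.
Set Implicit Arguments. Unset Strict Implicit. Unset Printing Implicit Defensive.
Import Order.TTheory GRing.Theory Num.Theory.
Local Open Scope ring_scope.

Section LieDefs.
Variables (R : realType) (V : vectType R).

Definition is_lie_bracket (br : V -> V -> V) : Prop :=
  [/\ (forall (a : R) (x y z : V), br (a *: x + y) z = a *: br x z + br y z),
      (forall (a : R) (x y z : V), br z (a *: x + y) = a *: br z x + br z y),
      (forall x : V, br x x = 0) &
      (forall x y z : V, br x (br y z) + br y (br z x) + br z (br x y) = 0)].

Definition nijenhuis (br : V -> V -> V) (J : 'End(V)) (x y : V) : V :=
  br x y + J (br (J x) y + br x (J y)) - br (J x) (J y).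

Definition is_complex_structure (br : V -> V -> V) (J : 'End(V)) : Prop :=
  (forall x : V, J (J x) = - x) /\ (forall x y : V, nijenhuis br J x y = 0).

Fixpoint a_ser (br : V -> V -> V) (J : 'End(V)) (l : nat) : V -> Prop :=
  match l with
  | 0 => fun x => x = 0
  | l'.+1 => fun x => forall y : V, a_ser br J l' (br x y) /\ a_ser br J l' (br (J x) y)
  end.

Definition t_step_complex (br : V -> V -> V) (J : 'End(V)) (t : nat) : Prop :=
  (0 < t)%N /\ (forall x : V, a_ser br J t x) /\
  (forall s : nat, (0 < s < t)%N -> ~ (forall x : V, a_ser br J s x)).

Definition two_step_nilpotent (br : V -> V -> V) : Prop :=
  (exists x y : V, br x y != 0) /\ (forall x y z : V, br (br x y) z = 0).

(** The derived algebra [n,n]: the span of all brackets. Since br is bilinear,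
    this is the span of the brackets of pairs of basis vectors. *)
Definition derived_alg (br : V -> V -> V) : {vspace V} :=
  <<[seq br u v | u <- (vbasis fullv : seq V), v <- (vbasis fullv : seq V)]>>%VS.

End LieDefs.

(* Main.v *)
Require Import Defs.
From HB Require Import structures.
From mathcomp Require Import all_boot all_order all_algebra.
From mathcomp Require Import reals.
Local Open Scope ring_scope.
Import GRing.Theory Num.Theory.
Set Implicit Arguments. Unset Strict Implicit.

Section Aux.
Variables (R : realType) (V : vectType R) (br : V -> V -> V).
Hypothesis Hl : is_lie_bracket br.

Lemma br_addl x y z : br (x + y) z = br x z + br y z.
Proof. by case: Hl => H1 _ _ _; rewrite -[x in LHS]scale1r H1 scale1r. Qed.
Lemma br_addr x y z : br z (x + y) = br z x + br z y.
Proof. by case: Hl => _ H1 _ _; rewrite -[x in LHS]scale1r H1 scale1r. Qed.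
Lemma br0l z : br 0 z = 0.
Proof. by apply: (@addrI _ (br 0 z)); rewrite -br_addl !addr0. Qed.
Lemma br0r z : br z 0 = 0.
Proof. by apply: (@addrI _ (br z 0)); rewrite -br_addr !addr0. Qed.
Lemma br_scalel a x z : br (a *: x) z = a *: br x z.
Proof. by case: Hl => H1 _ _ _; rewrite -[a *: x]addr0 H1 br0l addr0. Qed.
Lemma br_scaler a x z : br z (a *: x) = a *: br z x.
Proof. by case: Hl => _ H1 _ _; rewrite -[a *: x]addr0 H1 br0r addr0. Qed.

Lemma span_ind (P : V -> Prop) : P 0 -> (forall x y, P x -> P y -> P (x + y)) ->
  (forall a x, P x -> P (a *: x)) -> (forall u, u \in (vbasis fullv : seq V) -> P u) ->
  forall x, P x.
Proof.
move=> P0 PD PZ Pb x; rewrite (coord_vbasis (memvf x)).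
apply: (big_ind P) => // i _; apply: PZ; apply: Pb; apply: mem_nth.
by rewrite size_tuple.
Qed.

Lemma memv_br x y : br x y \in derived_alg br.
Proof.
move: x y; apply: span_ind.
- by move=> y; rewrite br0l mem0v.
- by move=> x x' Hx Hx' y; rewrite br_addl memvD.
- by move=> a x Hx y; rewrite br_scalel memvZ.
move=> u Hu; apply: span_ind.
- by rewrite br0r mem0v.
- by move=> y y' Hy Hy'; rewrite br_addr memvD.
- by move=> a y Hy; rewrite br_scaler memvZ.
move=> v Hv; apply: memv_span; exact: allpairs_f.
Qed.
End Aux.

Theorem mainTheorem6 (R : realType) (V : vectType R) (br : V -> V -> V) :
  is_lie_bracket br -> two_step_nilpotent br ->
  (exists J : 'End(V), is_complex_structure br J /\ t_step_complex br J 3) ->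
  (3 <= \dim (derived_alg br))%N.
Proof.
move=> Hl [_ Hc] [J [[HJ HN] [_ [_ Hmin]]]].
rewrite leqNgt; apply/negP => Hdim.
have claim : forall x y z, br (J (br x y)) z = 0.
  move=> x y z; set w := br x y.
  have wc : forall u, br w u = 0 by move=> u; exact: Hc.
  apply/eqP; apply: contraT => Hv; set v := br (J w) z in Hv.
  have Jv : J v = br (J w) (J z).
    have := HN w z; rewrite /nijenhuis !wc add0r addr0.
    by move/eqP; rewrite subr_eq0 => /eqP.
  have vc : forall u, br v u = 0 by move=> u; exact: Hc.
  have Jvc : forall u, br (J v) u = 0 by move=> u; rewrite Jv; exact: Hc.
  have JvN : J v != 0.
    apply: contra Hv => /eqP H; have := HJ v; rewrite H linear0 => /eqP.
    by rewrite eq_sym oppr_eq0.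
  have Hfree : free [:: v; J v].
    rewrite free_cons span_seq1 seq1_free JvN andbT.
    apply/negP => /vlineP [k Hk].
    have H2 : J v = - k *: v by rewrite {1}Hk linearZ /= HJ scalerN scaleNr.
    move: Hk; rewrite H2 scalerA => /eqP.
    rewrite -subr_eq0 -{1}[v]scale1r -scalerBl scaler_eq0 (negPf Hv) orbF.
    rewrite mulrN opprK; apply/negP.
    by apply: lt0r_neq0; apply: ltr_pwDl => //; exact: sqr_ge0.
  have Hsub : (<<[:: v; J v]>> <= derived_alg br)%VS.
    apply/span_subvP => u; rewrite !inE => /orP [] /eqP ->.
      exact: (memv_br Hl).
    by rewrite Jv; exact: (memv_br Hl).
  have Heq : <<[:: v; J v]>>%VS = derived_alg br.
    apply/eqP; rewrite eqEdim Hsub /=.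
    move/eqP: Hfree => ->; rewrite /=; by rewrite -ltnS.
  have : w \in derived_alg br by exact: (memv_br Hl).
  rewrite -Heq span_cons span_seq1 => /memv_addP [u1 /vlineP [a Ha] [u2 /vlineP [b Hb] Hw]].
  suff: v = 0 by move=> H; rewrite H eqxx in Hv.
  rewrite /v Hw Ha Hb.
  rewrite linearD !linearZ /= HJ scalerN -scaleNr (br_addl Hl) !(br_scalel Hl) vc Jvc.
  by rewrite !scaler0 addr0.
have := Hmin 2%N erefl; apply; move=> x y; split=> z; split.
- by apply: Hc.
- by apply: claim.
- by apply: Hc.
- by apply: claim.
Qed.
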